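(* For every $n\ge1$, the elements $z_{2k}$, $k=0,\dots,\lfloor\frac{n-1}{2}\rfloor$, together with the elementary symmetric polynomials $\sigma_{2k}$, $k=1,\dots,\lfloor\frac n2\rfloor$, form an algebraically independent set of generators of the ring $\mathbb C[x_1,\dots,x_n]^{S_n}$ of symmetric polynomials.
   Context: $U(\mathfrak h_n)$ is the associative superalgebra generated by odd elements $\xi_1,\dots,\xi_n$ with $\xi_i\xi_j+\xi_j\xi_i=0$ for $i\neq j$; $x_i=\xi_i^2$ are central. Let $T$ be the $\mathbb C[x_1,\dots,x_n]$-linear endomorphism of the free $\mathbb C[x_1,\dots,x_n]$-module with basis $\xi_1,\dots,\xi_n$ given by $T(\xi_j)=\sum_i t_{ij}\xi_i$ with $t_{ii}=0$, $t_{ij}=x_j$ for $i<j$, $t_{ij}=-x_j$ for $i>j$. Put $\phi_0=\sum_i\xi_i$, $\phi_k=T^k(\phi_0)$, and $z_{2k}=\frac12(\phi_0\phi_{2k}+\phi_{2k}\phi_0)\in\mathbb C[x_1,\dots,x_n]$. $\sigma_p$ denotes the $p$-th elementary symmetric polynomial in $x_1,\dots,x_n$. *)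

(* Defs.v *)
From mathcomp Require Import all_boot all_algebra.
From mathcomp Require Import Rstruct.
From mathcomp Require Import complex.
From mathcomp Require Import mpoly.
Set Implicit Arguments. Unset Strict Implicit. Unset Printing Implicit Defensive.
Import GRing.Theory.
Local Open Scope ring_scope.

Definition Cplx : numClosedFieldType := complex Rdefinitions.R.

Section Hn.
Variable n : nat.

(* Elements of the free C[x_1..x_n]-module with basis xi_1..xi_n
   (the odd part of degree 1 in U(h_n)) are represented by their
   coordinate column vectors: v represents  \sum_i v i 0 * xi_i. *)
Definition Pol := {mpoly Cplx[n]}.
Definition oddvec := 'cV[Pol]_n.

(* The matrix of T : T(xi_j) = \sum_i t_ij xi_i, with
   t_ii = 0, t_ij = x_j (i<j), t_ij = -x_j (i>j). *)
Definition Tmx : 'M[Pol]_n :=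
  \matrix_(i < n, j < n)
    (if (i < j)%N then 'X_j else if (j < i)%N then - 'X_j else 0).

Definition phi0 : oddvec := \col_(i < n) 1.
Definition phi (k : nat) : oddvec := iter k (mulmx Tmx) phi0.

(* Half-anticommutator (1/2)(u v + v u) in U(h_n) of two elements
   u = \sum_i a_i xi_i, v = \sum_i b_i xi_i with central polynomial
   coefficients. Since xi_i xi_j + xi_j xi_i = 0 (i <> j) and
   xi_i^2 = x_i, this equals \sum_i a_i b_i x_i, an element of
   C[x_1..x_n]. *)
Definition half_anticomm (u v : oddvec) : Pol :=
  \sum_(i < n) u i 0 * v i 0 * 'X_i.

Definition z (k2 : nat) : Pol := half_anticomm phi0 (phi k2) .

Definition sigma (p : nat) : Pol := mesym n Cplx p.

Definition gens : seq Pol :=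
  [seq z (2 * k) | k <- iota 0 ((n.-1)./2).+1] ++
  [seq sigma (2 * k) | k <- iota 1 (n./2)].

Definition subst_hom (m : nat) (s : m.-tuple Pol) (p : {mpoly Cplx[m]}) : Pol :=
  p \mPo s.

Definition alg_indep (m : nat) (s : m.-tuple Pol) : Prop :=
  forall p : {mpoly Cplx[m]}, subst_hom s p = 0 -> p = 0.

Definition generates_symmetric (m : nat) (s : m.-tuple Pol) : Prop :=
  (forall i : 'I_m, tnth s i \is symmetric) /\
  (forall q : Pol, q \is symmetric -> exists p : {mpoly Cplx[m]}, q = subst_hom s p).

End Hn.

(* Main.v *)
Require Import Defs.
From mathcomp Require Import all_boot all_algebra.
From mathcomp Require Import mpoly.
From mathcomp Require Import ring zify.
Set Implicit Arguments. Unset Strict Implicit. Unset Printing Implicit Defensive.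
Import GRing.Theory.
Local Open Scope ring_scope.
Lemma coef_prod1X (R : comNzRingType) (I : finType) (c : I -> R) k :
  (\prod_(j : I) (1 + (c j)%:P * 'X))`_k =
  \sum_(J : {set I} | #|J| == k) \prod_(j in J) c j.
Proof.
under eq_bigr => j _ do rewrite addrC.
rewrite bigA_distr coef_sum [RHS]big_mkcond /=; apply: eq_bigr => J _.
rewrite -big_mkcond /= big_split /= prodr_const -rmorph_prod coefCM coefXn.
by rewrite eq_sym; case: eqP; rewrite ?mulr1 ?mulr0.
Qed.

Lemma prod_swap1 (R : comNzRingType) (I : finType) (i0 : I) (f g : I -> R) :
  (forall j, j != i0 -> f j = g j) ->
  \prod_j f j * g i0 = \prod_j g j * f i0.
Proof.
move=> fg; rewrite (bigD1 i0) //= [in RHS](bigD1 i0) //=.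
rewrite (eq_bigr g); last by move=> j /fg.
by rewrite mulrAC [RHS]mulrAC [f i0 * _]mulrC.
Qed.

Section Gen.
Variables (R : comNzRingType) (n : nat) (x : 'I_n -> R).

Definition TG : 'M[R]_n :=
  \matrix_(i < n, j < n) (if (i < j)%N then x j else if (j < i)%N then - x j else 0).
Definition phG (k : nat) : 'cV[R]_n := iter k (mulmx TG) (\col_(i < n) 1).
Definition zG (k : nat) : R := \sum_(i < n) phG k i 0 * x i.

Definition cf (i : nat) (j : 'I_n) : R := if (j < i)%N then - x j else x j.
Definition cw (i : nat) (j : 'I_n) : R :=
  if (j < i)%N then - x j else if (i < j)%N then x j else 0.
Definition Fp (i : nat) : {poly R} := \prod_(j < n) (1 + (cf i j)%:P * 'X).
Definition Wp (i : nat) : {poly R} := \prod_(j < n) (1 + (cw i j)%:P * 'X).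

Lemma FW (i : 'I_n) : Fp i = Wp i * (1 + (x i)%:P * 'X).
Proof.
have := @prod_swap1 _ _ i (fun j => 1 + (cf i j)%:P * 'X) (fun j => 1 + (cw i j)%:P * 'X).
rewrite /cf /cw ltnn /= mul0r addr0 mulr1 -/(Fp i) -/(Wp i) => -> //.
move=> j ne; case: ltngtP => // /val_inj /eqP; by rewrite (negbTE ne).
Qed.

Lemma FWS (i : 'I_n) : Fp i.+1 = Wp i * (1 - (x i)%:P * 'X).
Proof.
have := @prod_swap1 _ _ i (fun j => 1 + (cf i.+1 j)%:P * 'X) (fun j => 1 + (cw i j)%:P * 'X).
rewrite /cf /cw ltnn ltnSn /= mul0r addr0 mulr1 -/(Fp i.+1) -/(Wp i) polyCN mulNr => -> //.
move=> j ne; rewrite ltnS leq_eqVlt.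
have -> : (val j == val i) = false by rewrite val_eqE (negbTE ne).
by case: ltngtP => // /val_inj /eqP; rewrite (negbTE ne).
Qed.


Definition DF (j : nat) : {poly R} := Fp j - Fp j.+1.

Lemma DF_ord (j : 'I_n) : DF j = ((x j)%:P * 'X * Wp j) *+ 2.
Proof.
rewrite /DF FW FWS; ring.
Qed.

Lemma SF_ord (j : 'I_n) : Fp j + Fp j.+1 = Wp j *+ 2.
Proof.
rewrite FW FWS; ring.
Qed.

Lemma I2 : (\sum_(j < n) (x j)%:P * 'X * Wp j) *+ 2 = Fp 0 - Fp n.
Proof.
rewrite -sumrMnl (eq_bigr (fun j : 'I_n => DF j)); last by move=> j _; rewrite DF_ord.
rewrite -(big_mkord xpredT DF) /DF.
have := telescope_sumr Fp (leq0n n) => /(congr1 -%R); rewrite opprB => <-.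
by rewrite -sumrN; apply: eq_bigr => j _; rewrite opprB.
Qed.

Lemma I1 (i : 'I_n) :
  (Wp i - 'X * \sum_(j < n) (TG i j)%:P * Wp j) *+ 2 = Fp 0 + Fp n.
Proof.
pose hN (j : nat) := if (i < j)%N then DF j else if (j < i)%N then - DF j else 0.
have E : ('X * \sum_(j < n) (TG i j)%:P * Wp j) *+ 2 = \sum_(j < n) hN j.
  rewrite mulr_sumr -sumrMnl; apply: eq_bigr => j _.
  rewrite /hN mxE DF_ord; case: ifP => _.
    by rewrite mulrCA mulrA.
  case: ifP => _; last by rewrite polyC0 !mul0r mulr0 mul0rn.
  rewrite polyCN mulNr mulrN mulNrn; congr (- (_ *+ 2)); ring.
rewrite mulrnBl E -(big_mkord xpredT hN).
rewrite (big_cat_nat _ (n := i)) //=; last by apply: ltnW.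
rewrite (big_cat_nat _ (m := i) (n := i.+1)) //= big_nat1.
rewrite {2}/hN ltnn.
rewrite add0r.
rewrite (eq_big_nat _ _ (F2 := fun j => - DF j)); last first.
  by move=> j /andP[_ lt]; rewrite /hN ltnNge (ltnW lt) lt.
rewrite [\sum_(i.+1 <= j < n) hN j](eq_big_nat _ _ (F2 := DF)); last first.
  by move=> j /andP[lt _]; rewrite /hN lt.
rewrite sumrN /DF.
have T1 := telescope_sumr Fp (leq0n i).
have T2 := telescope_sumr Fp (ltn_ord i).
have -> : \sum_(0 <= k < i) (Fp k - Fp k.+1) = Fp 0 - Fp i.
  by rewrite -opprB -T1 -sumrN; apply: eq_bigr => k _; rewrite opprB.
have -> : \sum_(i.+1 <= k < n) (Fp k - Fp k.+1) = Fp i.+1 - Fp n.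
  by rewrite -opprB -T2 -sumrN; apply: eq_bigr => k _; rewrite opprB.
rewrite -SF_ord; ring.
Qed.

Definition ee (k : nat) : R := (Fp 0 + Fp n)`_k.
Definition oo (k : nat) : R := (Fp 0 - Fp n)`_k.
Definition wv (k : nat) : 'cV[R]_n := \col_(i < n) (Wp i)`_k.

Lemma wv0 : wv 0 *+ 2 = ee 0 *: phG 0.
Proof.
apply/matrixP => i j; rewrite ord1 !mxE /ee -(I1 i) coefMn coefB coefXM /=.
by rewrite subr0 mulr1.
Qed.

Lemma wvS k : wv k.+1 *+ 2 = TG *m (wv k *+ 2) + ee k.+1 *: phG 0.
Proof.
apply/matrixP => i j; rewrite ord1 !mxE /ee -(I1 i) coefMn coefB coefXM /=.
rewrite coef_sum mulr1.
rewrite (eq_bigr (fun l => ((TG i l)%:P * Wp l)`_k *+ 2)); last first.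
  by move=> l _; rewrite coefCM !mxE mulr2n mulrDr.
rewrite sumrMnl; ring.
Qed.

Lemma wv_sum k : wv k *+ 2 = \sum_(j < k.+1) ee j *: phG (k - j).
Proof.
elim: k => [|k IH]; first by rewrite wv0 big_ord1.
rewrite wvS IH [RHS]big_ord_recr /= subnn; congr (_ + _).
rewrite mulmx_sumr; apply: eq_bigr => j _.
by rewrite -scalemxAr subSn ?leq_ord.
Qed.

Lemma zid k : \sum_(j < k.+1) ee j * zG (k - j) = oo k.+1.
Proof.
rewrite /oo -I2 coefMn coef_sum.
have -> : \sum_(j < k.+1) ee j * zG (k - j) = \sum_(i < n) (wv k *+ 2) i 0 * x i.
  rewrite wv_sum; under [RHS]eq_bigr => i _ do rewrite summxE mulr_suml.
  rewrite exchange_big /=; apply: eq_bigr => j _.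
  by rewrite /zG mulr_sumr; apply: eq_bigr => i _; rewrite mxE mulrA.
rewrite -sumrMnl; apply: eq_bigr => i _.
rewrite -mulrA coefCM coefXM /= !mxE.
ring.
Qed.

End Gen.

Lemma comp_mpolyA (R : comNzRingType) (k l m : nat) (p : {mpoly R[k]})
  (lq : k.-tuple {mpoly R[l]}) (lr : l.-tuple {mpoly R[m]}) :
  (p \mPo lq) \mPo lr = p \mPo [tuple (tnth lq i \mPo lr) | i < k].
Proof.
rewrite [p \mPo lq]comp_mpolyEX [p \mPo _]comp_mpolyEX raddf_sum /=.
apply: eq_bigr => mm _; rewrite comp_mpolyZ; congr (_ *: _).
rewrite !comp_mpolyX rmorph_prod /=; apply: eq_bigr => i _.
by rewrite rmorphXn tnth_mktuple.
Qed.

Lemma rec_uniq (R : comNzRingType) (a w w' : nat -> R) (N : nat) :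
  a 0%N = 1 ->
  (forall k, (k <= N)%N ->
     \sum_(j < k.+1) a j * w (k - j)%N = \sum_(j < k.+1) a j * w' (k - j)%N) ->
  forall k, (k <= N)%N -> w k = w' k.
Proof.
move=> a0 H k; elim: k {-2}k (leqnn k) => [|K IH] k.
  rewrite leqn0 => /eqP -> /H; rewrite !big_ord1 a0 !mul1r; exact.
move=> lek leN; have := H k leN; rewrite !big_ord_recl a0 !mul1r subn0.
rewrite (eq_bigr (fun j : 'I_k => a (bump 0 j) * w' (k - bump 0 j)%N)).
  by move/addIr.
move=> j _; rewrite IH //; last by apply: leq_trans leN; rewrite leq_subr.
rewrite lift0; have := ltn_ord j; lia.
Qed.

Section Main.
Variable n : nat.
Local Notation Pl := {mpoly Cplx[n]}.
Definition sg (k : nat) : Pl := mesym n Cplx k.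
Definition xs (j : 'I_n) : Pl := 'X_j.

Lemma z_zG k : z n k = zG xs k.
Proof. by rewrite /z /half_anticomm /zG; apply: eq_bigr => i _; rewrite mxE mul1r. Qed.

Lemma Fp0_coef k : (Fp xs 0)`_k = sg k.
Proof. by rewrite coef_prod1X. Qed.

Lemma Fpn_coef k : (Fp xs n)`_k = (-1) ^+ k * sg k.
Proof.
rewrite coef_prod1X /sg /mesym mulr_sumr; apply: eq_bigr => J /eqP <-.
rewrite /cf; under eq_bigr => j _ do rewrite ltn_ord.
by rewrite prodrN.
Qed.

Lemma coefD_eq (R : nzRingType) (p q : {poly R}) a b k :
  p`_k = a -> q`_k = b -> (p + q)`_k = a + b.
Proof. by rewrite coefD => -> ->. Qed.
Lemma coefB_eq (R : nzRingType) (p q : {poly R}) a b k :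
  p`_k = a -> q`_k = b -> (p - q)`_k = a - b.
Proof. by rewrite coefB => -> ->. Qed.

Lemma ee_P k : ee xs k = (if odd k then 0 else sg k) *+ 2.
Proof.
rewrite /ee (coefD_eq (Fp0_coef k) (Fpn_coef k)) -signr_odd.
by case: (odd k); rewrite ?expr1 ?expr0 ?mulN1r ?mul1r ?subrr ?mul0rn // mulr2n.
Qed.

Lemma oo_P k : oo xs k.+1 = (if odd k then 0 else sg k.+1) *+ 2.
Proof.
rewrite /oo (coefB_eq (Fp0_coef k.+1) (Fpn_coef k.+1)) -signr_odd /=.
by case: (odd k); rewrite /= ?expr1 ?expr0 ?mulN1r ?mul1r ?subrr ?mul0rn // opprK mulr2n.
Qed.

Lemma natmul2_inj (a b : Pl) : a *+ 2 = b *+ 2 -> a = b.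
Proof.
rewrite -!(scaler_nat (R := Cplx)) => /(congr1 (fun v => (2%:R)^-1 *: v)).
rewrite !scalerA mulVf ?scale1r //.
by rewrite Num.Theory.pnatr_eq0.
Qed.

Lemma zrec k : \sum_(j < k.+1) (if odd j then 0 else sg j) * z n (k - j)%N
   = if odd k then 0 else sg k.+1.
Proof.
apply: natmul2_inj; rewrite -(oo_P k) -(zid xs k) -sumrMnl; apply: eq_bigr => j _.
by rewrite ee_P z_zG mulrnAl.
Qed.

Lemma z_sym k : z n k \is symmetric.
Proof.
elim: k {-2}k (leqnn k) => [|K IH] k lek.
  move: lek; rewrite leqn0 => /eqP ->.
  have := zrec 0; rewrite big_ord1 /= /sg mesym0E mul1r => ->; exact: mesym_sym.
have := zrec k; rewrite big_ord_recl /= /sg mesym0E mul1r subn0 => /eqP.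
rewrite eq_sym -subr_eq => /eqP <-; apply: rpredB.
  by case: (odd k); [exact: rpred0 | exact: mesym_sym].
apply: rpred_sum => j _; apply: rpredM.
  by case: ifP => _; [exact: rpred0 | exact: mesym_sym].
apply: IH; move: lek; rewrite /bump /=; have := ltn_ord j; lia.
Qed.

End Main.

Definition Yv (m i : nat) : {mpoly Cplx[m]} := \sum_(j < m | val j == i) 'X_j.

Lemma Yv_comp (k m : nat) (t : m.-tuple {mpoly Cplx[k]}) i : Yv m i \mPo t = t`_i.
Proof.
rewrite /Yv raddf_sum /=.
under eq_bigr => j _ do rewrite comp_mpolyXU.
case: (ltnP i m) => [lt|ge].
  by rewrite (big_pred1 (Ordinal lt)).
rewrite big_pred0 ?nth_default ?size_tuple // => j.
by apply/negbTE; rewrite neq_ltn (leq_trans (ltn_ord j) ge).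
Qed.

Lemma Yv_X (m : nat) (i : 'I_m) : Yv m i = 'X_i.
Proof.
by rewrite /Yv (big_pred1 i).
Qed.

Lemma nth_mkt (T : Type) (x0 : T) (m : nat) (f : 'I_m -> T) j (lt : (j < m)%N) :
  nth x0 [tuple f i | i < m] j = f (Ordinal lt).
Proof. by rewrite -[j]/(nat_of_ord (Ordinal lt)) nth_mktuple. Qed.

Section Final.
Variable n : nat.
Local Notation Pl := {mpoly Cplx[n]}.
Local Notation K := ((n.-1)./2).
Local Notation L := (n./2).
Local Notation m := (size (gens n)).
Local Notation gT := (in_tuple (gens n)).
Definition Sx : n.-tuple Pl := [tuple mesym n Cplx i.+1 | i < n].

Lemma size_gens : m = (K.+1 + L)%N.
Proof. by rewrite /gens size_cat !size_map !size_iota. Qed.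

Lemma size_gens_n : (0 < n)%N -> m = n.
Proof. rewrite size_gens -!divn2; lia. Qed.

Lemma nth_gens i : (gens n)`_i =
  if (i < K.+1)%N then z n (2 * i) else if (i < K.+1 + L)%N then sg n (2 * (i - K)) else 0.
Proof.
rewrite /gens nth_cat size_map size_iota.
case: ifP => lt.
  by rewrite (nth_map 0%N) ?size_iota // nth_iota.
case: ifP => lt2.
  rewrite (nth_map 0%N) ?size_iota; last by move: lt lt2; lia.
  rewrite nth_iota; last by move: lt lt2; lia.
  rewrite /sigma /sg; congr (mesym _ _ (2 * _)); move: lt lt2; lia.
by rewrite nth_default // size_map size_iota; move: lt lt2; lia.
Qed.

Lemma gens_sym i : (gens n)`_i \is symmetric.
Proof.
rewrite nth_gens; case: ifP => _; first exact: z_sym.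
case: ifP => _; [exact: mesym_sym | exact: rpred0].
Qed.

Lemma sg_S d : Yv n d \mPo Sx = sg n d.+1.
Proof.
rewrite Yv_comp; case: (ltnP d n) => [lt|ge].
  by rewrite (nth_mkt _ _ lt).
by rewrite nth_default ?size_tuple // /sg mesym_geqnE.
Qed.


Definition Xs (d : nat) : Pl := if d == 0%N then 1 else Yv n d.-1.

Lemma Xs_S d : Xs d \mPo Sx = sg n d.
Proof.
rewrite /Xs; case: eqP => [->|/eqP nz]; first by rewrite comp_mpoly1 /sg mesym0E.
by rewrite sg_S prednK // lt0n.
Qed.

Lemma symf_S (q : Pl) : q \is symmetric -> symf q \mPo Sx = q.
Proof. by move=> sq; rewrite -symfP. Qed.

Definition Gt : m.-tuple Pl := [tuple symf (tnth gT i) | i < m].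

Lemma G_S : [tuple tnth Gt i \mPo Sx | i < m] = gT.
Proof.
apply: eq_from_tnth => i; rewrite !tnth_mktuple symf_S //.
by rewrite (tnth_nth 0) gens_sym.
Qed.

Definition Hse (l : nat) : {mpoly Cplx[m]} :=
  if odd l then 0 else if l == 0%N then 1 else Yv m (K + l./2).
Definition Hz (l : nat) : {mpoly Cplx[m]} := if odd l then 0 else Yv m (l./2).
Definition Hs (d : nat) : {mpoly Cplx[m]} :=
  if odd d then \sum_(l < d) Hse l * Hz (d.-1 - l) else Hse d.
Definition Ht : n.-tuple {mpoly Cplx[m]} := [tuple Hs i.+1 | i < n].

Lemma Hse_g l : (l <= n)%N -> Hse l \mPo gT = if odd l then 0 else sg n l.
Proof.
rewrite /Hse; case: ifP => od le; first by rewrite comp_mpoly0.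
case: eqP => [->|/eqP nz]; first by rewrite comp_mpoly1 /sg mesym0E.
rewrite Yv_comp in_tupleE nth_gens.
have o2 : (l %% 2 = 0)%N by rewrite modn2 od.
case: ifP => [|_]; first by move: nz le o2; rewrite -!divn2; lia.
case: ifP => [_|]; last by move: nz le o2; rewrite -!divn2; lia.
congr (sg n _); move: nz le o2; rewrite -!divn2; lia.
Qed.

Lemma Hz_g l : (l < n)%N -> Hz l \mPo gT = if odd l then 0 else z n l.
Proof.
rewrite /Hz; case: ifP => od le; first by rewrite comp_mpoly0.
rewrite Yv_comp in_tupleE nth_gens.
have o2 : (l %% 2 = 0)%N by rewrite modn2 od.
case: ifP => [_|]; last by move: le o2; rewrite -!divn2; lia.
congr (z n _); move: le o2; rewrite -!divn2; lia.
Qed.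

Lemma Hs_g d : (0 < d <= n)%N -> Hs d \mPo gT = sg n d.
Proof.
move=> /andP[d0 dn]; rewrite /Hs; case: ifP => od; last first.
  by rewrite Hse_g // od.
have od1 : odd d.-1 = false.
  by move: od; rewrite -{1}(prednK d0) /= => /negbTE.
have := zrec n d.-1; rewrite od1 prednK // => <-.
rewrite rmorph_sum /=; apply: eq_bigr => l _; rewrite rmorphM /=.
have ll : (l < d)%N := ltn_ord l.
rewrite Hse_g ?(ltnW (leq_trans ll dn)) // Hz_g; last first.
  by move: ll dn; lia.
case: ifP => ol; first by rewrite !mul0r.
rewrite oddB ?od1 ?ol //; move: ll d0; lia.
Qed.

Lemma H_g : [tuple tnth Ht j \mPo gT | j < n] = Sx.
Proof.
apply: eq_from_tnth => j; rewrite !tnth_mktuple Hs_g //.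
by rewrite ltn_ord.
Qed.


Lemma un_Sx (t1 t2 : Pl) : t1 \mPo Sx = t2 \mPo Sx -> t1 = t2.
Proof. exact: msym_fundamental_un. Qed.

Definition GZ (k : nat) : Pl := symf (z n k).
Definition Xa (j : nat) : Pl := if odd j then 0 else Xs j.
Definition Xb (k : nat) : Pl := if odd k then 0 else Xs k.+1.

Lemma lift_rec k : \sum_(j < k.+1) Xa j * GZ (k - j) = Xb k.
Proof.
apply: un_Sx; rewrite rmorph_sum /= /Xb.
have -> : (if odd k then 0 else Xs k.+1) \mPo Sx = if odd k then 0 else sg n k.+1.
  by case: ifP => _; rewrite ?comp_mpoly0 ?Xs_S.
rewrite -zrec; apply: eq_bigr => j _; rewrite rmorphM /= /GZ symf_S ?z_sym //.
by rewrite /Xa; case: ifP => _; rewrite ?comp_mpoly0 ?Xs_S.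
Qed.

Lemma Hs_even j : ~~ odd j -> Hs j = Hse j.
Proof. by rewrite /Hs => /negbTE ->. Qed.

Lemma Xs_H d : (0 < d <= n)%N -> Xs d \mPo Ht = Hs d.
Proof.
move=> /andP[d0 dn]; rewrite /Xs; case: eqP => [e|_]; first by move: d0; rewrite e.
have lt : (d.-1 < n)%N by rewrite prednK.
by rewrite Yv_comp (nth_mkt _ _ lt) prednK.
Qed.

Lemma XaH j : (j <= n)%N -> Xa j \mPo Ht = Hse j.
Proof.
move=> jn; rewrite /Xa; case: ifP => od.
  by rewrite comp_mpoly0 /Hse od.
case: (posnP j) => [->|j0].
  by rewrite /Xs /Hse /= comp_mpoly1.
by rewrite Xs_H ?j0 ?jn // Hs_even ?od.
Qed.

Lemma XbH k : (k < n)%N -> Xb k \mPo Ht = \sum_(l < k.+1) Hse l * Hz (k - l).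
Proof.
move=> kn; rewrite /Xb; case: ifP => od.
  rewrite comp_mpoly0; symmetry; apply: big1 => l _.
  rewrite /Hse; case: ifP => ol; first by rewrite mul0r.
  rewrite /Hz oddB ?od ?ol ?mulr0 //; have := ltn_ord l; lia.
by rewrite Xs_H //= /Hs /= od.
Qed.

Lemma GZ_H k : (k < n)%N -> GZ k \mPo Ht = Hz k.
Proof.
move=> kn; apply: (@rec_uniq _ Hse (fun k => GZ k \mPo Ht) Hz n.-1) => //.
  move=> k' k'n; have := congr1 (comp_mpoly Ht) (lift_rec k').
  rewrite rmorph_sum /= XbH; last by move: k'n kn; lia.
  move=> <-; apply: eq_bigr => j _; rewrite rmorphM /= XaH //.
  have := ltn_ord j; move: k'n kn; lia.
by move: kn; lia.
Qed.

Lemma G_H : (0 < n)%N -> [tuple tnth Gt i \mPo Ht | i < m] = [tuple 'X_i | i < m].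
Proof.
move=> n0; apply: eq_from_tnth => i; rewrite !tnth_mktuple (tnth_nth 0) in_tupleE nth_gens.
have im : (i < K.+1 + L)%N by rewrite -size_gens ltn_ord.
case: ifP => iK.
  rewrite -/(GZ _) GZ_H; last by move: iK n0; rewrite -!divn2; lia.
  rewrite /Hz oddM andFb.
  have -> : (2 * i)./2 = i by rewrite -divn2; lia.
  exact: Yv_X.
rewrite im.
have -> : symf (sg n (2 * (i - K))) = Xs (2 * (i - K)).
  by apply: un_Sx; rewrite symf_S ?Xs_S // /sg mesym_sym.
rewrite Xs_H; last by move: iK im; rewrite -!divn2; lia.
rewrite Hs_even ?oddM ?andFb // /Hse oddM andFb.
case: eqP => [|_]; first by move: iK; lia.
have -> : (K + (2 * (i - K))./2)%N = i by move: iK; rewrite -!divn2; lia.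
exact: Yv_X.
Qed.

End Final.

Theorem corollary5p6 (n : nat) (hn : (1 <= n)%N) :
  size (gens n) = n /\
  alg_indep (in_tuple (gens n)) /\ generates_symmetric (in_tuple (gens n)).
Proof.
split; first exact: size_gens_n.
split.
  move=> p; rewrite /subst_hom => hp.
  have h1 : (p \mPo Gt n) \mPo Sx n = 0 by rewrite comp_mpolyA G_S.
  have h2 : p \mPo Gt n = 0 by exact: msym_fundamental_un0 h1.
  have := congr1 (comp_mpoly (Ht n)) h2.
  by rewrite comp_mpolyA G_H // comp_mpoly_id comp_mpoly0.
split.
  by move=> i; rewrite (tnth_nth 0) gens_sym.
move=> q sq; exists (symf q \mPo Ht n).
by rewrite /subst_hom comp_mpolyA H_g symf_S.
Qed.
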